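(* Let $Y$ be uniformly distributed on a finite set $\mathcal{Y}=\{y_1,\dots,y_m\}\subset\mathbb{R}$ of $m$ distinct values ($m\in\mathbb{N}$ arbitrary), and let $k\ge 0$ be the number of shared key bits. Then: (1) there exists an encoding scheme (with $r=m$ transmission symbols) whose eavesdropper distortion $D_{ach}(k)$ satisfies $$\Delta = D_{max}-D_{ach}(k)\le \frac{D_{max}}{2^k};$$ (2) with $d=\max_{y_i,y_j\in\mathcal{Y}}(y_i-y_j)$, there exists an encoding scheme (with $r=m$ transmission symbols) whose eavesdropper distortion satisfies $$\Delta = D_{max}-D_{ach}(k)\le \frac{d^2}{2^{2k}}.$$
   Context: Single-source setting. $Y$ is a real random variable taking values in a finite set $\mathcal{Y}=\{y_1,\dots,y_m\}\subset\mathbb{R}$ of distinct values. A source and a receiver share a secret key $K$, uniform on $\{1,\dots,2^k\}$ and independent of $Y$. An encoding scheme consists of a finite set of transmission symbols $\{\tau_1,\dots,\tau_r\}$ together with, for each key value $i\in\{1,\dots,2^k\}$, an injective map $\sigma_i:\mathcal{Y}\to\{\tau_1,\dots,\tau_r\}$ (injectivity guarantees that the receiver, knowing $K$, recovers $Y$ exactly); the source transmits $T=\sigma_K(Y)$. An eavesdropper observes $T$ but not $K$. Her distortion is $D_{ach}(k)=\min_{\hat f}\mathbb{E}[(Y-\hat f(T))^2]$, the minimum over all functions $\hat f$ of the observed symbol, and $D_{max}=\mathrm{var}(Y)$. Write $\Delta=D_{max}-D_{ach}(k)$. *)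

(* Defs.v *)
From HB Require Import structures.
From mathcomp Require Import all_boot all_order all_algebra.
Set Implicit Arguments. Unset Strict Implicit. Unset Printing Implicit Defensive.
Import Order.TTheory GRing.Theory Num.Theory.
Local Open Scope ring_scope.

(* Y is uniform on { y i | i : 'I_m }, y injective; the key K is uniform on
   'I_(2^k) (i.e. {1..2^k} shifted), independent of Y. *)

Definition is_scheme (m k r : nat) (sigma : 'I_(2 ^ k) -> 'I_m -> 'I_r) : Prop :=
  forall key, injective (sigma key).

(* E[(Y - fhat T)^2] for the joint uniform distribution of (Y, K). *)
Definition distortion (R : realFieldType) (m k r : nat) (y : 'I_m -> R)
    (sigma : 'I_(2 ^ k) -> 'I_m -> 'I_r) (fhat : 'I_r -> R) : R :=
  (m%:R * (2 ^ k)%N%:R)^-1 *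
    \sum_(i < m) \sum_(key < 2 ^ k) (y i - fhat (sigma key i)) ^+ 2.

Definition is_Dach (R : realFieldType) (m k r : nat) (y : 'I_m -> R)
    (sigma : 'I_(2 ^ k) -> 'I_m -> 'I_r) (D : R) : Prop :=
  (exists fhat : 'I_r -> R, distortion y sigma fhat = D) /\
  (forall fhat : 'I_r -> R, D <= distortion y sigma fhat).

Definition meanY (R : realFieldType) (m : nat) (y : 'I_m -> R) : R :=
  m%:R^-1 * \sum_(i < m) y i.

Definition Dmax (R : realFieldType) (m : nat) (y : 'I_m -> R) : R :=
  m%:R^-1 * \sum_(i < m) (y i - meanY y) ^+ 2.

(* d = max_{i,j} (y_i - y_j); the 0 default is harmless since the diagonal
   terms are 0 and m > 0. *)
Definition diam (R : realFieldType) (m : nat) (y : 'I_m -> R) : R :=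
  \big[Num.max/0]_(i < m) \big[Num.max/0]_(j < m) (y i - y j).

(* Main.v *)
Require Import Defs.
From HB Require Import structures.
From mathcomp Require Import all_boot all_order all_algebra all_fingroup ring lra.
Import Order.TTheory GRing.Theory Num.Theory.
Local Open Scope ring_scope.
Set Implicit Arguments. Unset Strict Implicit.

Section Pair.
Variable R : realFieldType.

Lemma sort_perm (m : nat) (w : 'I_m -> R) : (0 < m)%N ->
  exists rho : {perm 'I_m}, forall i j : 'I_m, (i <= j)%N -> w (rho i) <= w (rho j).
Proof.
move=> m0; set x0 : 'I_m := Ordinal m0.
set e := sort (fun i j : 'I_m => w i <= w j) (enum 'I_m).
have pe : perm_eq e (enum 'I_m) by rewrite perm_sort.
have se : size e = m by rewrite (perm_size pe) size_enum_ord.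
have ue : uniq e by rewrite (perm_uniq pe) enum_uniq.
have so : sorted (fun i j : 'I_m => w i <= w j) e.
  by apply: sort_sorted => a b; exact: le_total.
have finj : injective (fun i : 'I_m => nth x0 e i).
  move=> i j /eqP; rewrite nth_uniq ?se //; by move/eqP/val_inj.
exists (perm finj) => i j ij; rewrite !permE.
apply: (sorted_leq_nth _ _ _ so) => //; rewrite ?inE ?se //.
by move=> a b c /= h1 h2; exact: le_trans h1 h2.
Qed.

Lemma pairing (m : nat) (w : 'I_m -> R) : (0 < m)%N ->
  exists pi : {perm 'I_m},
    m%:R * (\sum_t w t * w (pi t)) <= (\sum_t w t) ^+ 2 /\
    forall L, (forall t t', w t - w t' <= L) ->
      forall t t', (w t + w (pi t)) - (w t' + w (pi t')) <= L.
Proof.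
move=> m0; have [rho mono] := sort_perm w m0.
set Rv := perm (@rev_ord_inj m).
exists (rho^-1 * Rv * rho)%g.
have piE : forall i, (rho^-1 * Rv * rho)%g (rho i) = rho (rev_ord i).
  by move=> i; rewrite !permM permK permE.
set u := fun i => w (rho i).
have revle : forall i j : 'I_m, (i <= j)%N -> (rev_ord j <= rev_ord i)%N.
  move=> i j ij /=; apply: leq_sub2l; by rewrite ltnS.
split.
- rewrite (reindex_inj (@perm_inj _ rho)) /=.
  rewrite [\sum_t w t](reindex_inj (@perm_inj _ rho)) /=.
  under eq_bigr do rewrite piE.
  set A := \sum_i w (rho i) * w (rho (rev_ord i)).
  set S := \sum_i w (rho i).
  have Sr : \sum_i w (rho (rev_ord i)) = S.
    by rewrite (reindex_inj (@rev_ord_inj m)) /=; apply: eq_bigr => i _; rewrite rev_ordK.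
  have tot : \sum_(i < m) \sum_(j < m) (u i - u j) * (u (rev_ord i) - u (rev_ord j)) <= 0.
    apply: sumr_le0 => i _; apply: sumr_le0 => j _.
    case: (leqP i j) => ij.
    + apply: mulr_le0_ge0; first by rewrite subr_le0; exact: mono.
      by rewrite subr_ge0; apply: mono; exact: revle.
    + apply: mulr_ge0_le0; first by rewrite subr_ge0; apply: mono; exact: ltnW.
      by rewrite subr_le0; apply: mono; apply: revle; exact: ltnW.
  have ex : \sum_(i < m) \sum_(j < m) (u i - u j) * (u (rev_ord i) - u (rev_ord j))
     = 2%:R * (m%:R * A - S ^+ 2).
    have e1 : forall i j, (u i - u j) * (u (rev_ord i) - u (rev_ord j)) =
      u i * u (rev_ord i) + u j * u (rev_ord j) - (u i * u (rev_ord j) + u j * u (rev_ord i)).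
      by move=> i j; ring.
    under eq_bigr do under eq_bigr do rewrite e1.
    rewrite (eq_bigr (fun i => m%:R * (u i * u (rev_ord i)) + A - (u i * S + S * u (rev_ord i)))); last first.
      move=> i _; rewrite sumrB big_split /= big_split /= sumr_const card_ord.
      rewrite -big_distrr -big_distrl /= /u Sr -/S -/A -mulr_natr; ring.
    rewrite sumrB big_split /= sumr_const card_ord big_split /= -!big_distrl -!big_distrr /= /u Sr -/S -/A.
    rewrite -mulr_natr; ring.
  move: tot; rewrite ex; rewrite -/A -/S => h. nra.
- move=> L hL t t'.
  rewrite -[t](permKV rho) -[t'](permKV rho) !piE.
  set i := (rho^-1)%g t; set j := (rho^-1)%g t'.
  case: (leqP i j) => ij.
  + have h1 : w (rho i) <= w (rho j) by exact: mono.
    have h2 := hL (rho (rev_ord i)) (rho (rev_ord j)). lra.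
  + have h1 : w (rho (rev_ord i)) <= w (rho (rev_ord j)) by apply: mono; apply: revle; exact: ltnW.
    have h2 := hL (rho i) (rho j). lra.
Qed.
End Pair.

Set Implicit Arguments. Unset Strict Implicit.

Section Main.
Variable R : realFieldType.
Variable m : nat.
Variable y : 'I_m -> R.
Hypothesis m0 : (0 < m)%N.

Definition post (s : seq {perm 'I_m}) (t : 'I_m) : R :=
  (size s)%:R^-1 * \sum_(p <- s) y (p t).
Definition Delta s := m%:R^-1 * \sum_t (post s t - meanY y) ^+ 2.
Definition sig k (s : seq {perm 'I_m}) : 'I_(2 ^ k) -> 'I_m -> 'I_m :=
  fun key i => (nth 1%g s key)^-1%g i.

Lemma sum_cst (T : Type) (s : seq T) (x : R) : \sum_(p <- s) x = x *+ size s.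
Proof. elim: s => [|a s IH]; first by rewrite big_nil.
by rewrite big_cons IH /= mulrS. Qed.

Lemma sq_dev (T : Type) (s : seq T) (a : T -> R) (c : R) : (0 < size s)%N ->
  \sum_(p <- s) (a p - c) ^+ 2 =
  \sum_(p <- s) (a p - (size s)%:R^-1 * \sum_(q <- s) a q) ^+ 2
  + (size s)%:R * ((size s)%:R^-1 * \sum_(q <- s) a q - c) ^+ 2.
Proof.
move=> s0; set mu := (size s)%:R^-1 * \sum_(q <- s) a q.
have e : forall x u v : R, (x - v) ^+ 2 = (x - u) ^+ 2 + (2 * (u - v)) * (x - u) + (u - v) ^+ 2.
  by move=> x u v; ring.
have nz : (size s)%:R != 0 :> R by rewrite pnatr_eq0 -lt0n.
have z : \sum_(i <- s) (a i - mu) = 0.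
  by rewrite sumrB sum_cst -mulr_natl /mu mulrA mulfV ?mul1r ?subrr.
have h2 : \sum_(i <- s) 2 * (mu - c) * (a i - mu) = 0.
  by rewrite -big_distrr /= z mulr0.
rewrite (eq_bigr _ (fun p _ => e (a p) mu c)) !big_split /= h2 sum_cst addr0.
by rewrite mulr_natl.
Qed.
Lemma nth_sum k (s : seq {perm 'I_m}) (F : {perm 'I_m} -> R) : size s = (2 ^ k)%N ->
  \sum_(key < 2 ^ k) F (nth 1%g s key) = \sum_(p <- s) F p.
Proof. by move=> hs; rewrite (big_nth 1%g) hs big_mkord. Qed.

Lemma dist_formula k s (f : 'I_m -> R) : size s = (2 ^ k)%N ->
  distortion y (@sig k s) f =
  (m%:R * (2 ^ k)%N%:R)^-1 * \sum_t \sum_(p <- s) (y (p t) - f t) ^+ 2.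
Proof.
move=> hs; rewrite /distortion; congr (_ * _).
rewrite exchange_big /=.
transitivity (\sum_(key < 2 ^ k) \sum_t (y (nth 1%g s key t) - f t) ^+ 2).
  apply: eq_bigr => key _; rewrite (reindex_inj (@perm_inj _ (nth 1%g s key))) /=.
  by apply: eq_bigr => t _; rewrite /sig permK.
rewrite (nth_sum (fun p => \sum_t (y (p t) - f t) ^+ 2) hs).
by rewrite exchange_big.
Qed.

Lemma sum_post s : (0 < size s)%N -> \sum_t post s t = \sum_i y i.
Proof.
move=> s0; rewrite /post -big_distrr /= exchange_big /=.
rewrite (eq_bigr (fun _ => \sum_i y i)); last first.
  by move=> p _; rewrite [RHS](reindex_inj (@perm_inj _ p)).
rewrite sum_cst -(mulr_natl (\sum_i y i)) mulrA mulVf ?mul1r //.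
by rewrite pnatr_eq0 -lt0n.
Qed.

Lemma scheme_ok k s : size s = (2 ^ k)%N ->
  is_scheme (@sig k s) /\ is_Dach y (@sig k s) (Dmax y - Delta s).
Proof.
move=> hs; split; first by move=> key; exact: perm_inj.
have s0 : (0 < size s)%N by rewrite hs expn_gt0.
have N0 : (size s)%:R != 0 :> R by rewrite pnatr_eq0 -lt0n.
have m0' : m%:R != 0 :> R by rewrite pnatr_eq0 -lt0n.
set M := meanY y.
have G : forall t c, \sum_(p <- s) (y (p t) - c) ^+ 2 =
    \sum_(p <- s) (y (p t) - post s t) ^+ 2 + (size s)%:R * (post s t - c) ^+ 2.
  by move=> t c; rewrite /post (@sq_dev _ s (fun p => y (p t)) c s0).
have DE : distortion y (@sig k s) (post s) = Dmax y - Delta s.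
  rewrite (dist_formula _ hs).
  have E : forall t, \sum_(p <- s) (y (p t) - post s t) ^+ 2 =
      \sum_(p <- s) (y (p t) - M) ^+ 2 - (size s)%:R * (post s t - M) ^+ 2.
    by move=> t; rewrite (G t M) addrK.
  rewrite (eq_bigr _ (fun t _ => E t)) sumrB exchange_big /=.
  rewrite (eq_bigr (fun _ => \sum_i (y i - M) ^+ 2)); last first.
    by move=> p _; rewrite [RHS](reindex_inj (@perm_inj _ p)).
  rewrite sum_cst -big_distrr /= /Dmax /Delta -/M -hs.
  set V := \sum_i (y i - M) ^+ 2; set Q := \sum_t (post s t - M) ^+ 2.
  clearbody V Q; rewrite -mulr_natr; field; by apply/andP.
split; first by exists (post s).
move=> f; rewrite -DE !(dist_formula _ hs).
apply: ler_wpM2l; first by rewrite invr_ge0 mulr_ge0 ?ler0n.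
apply: ler_sum => t _; rewrite (G t (f t)) lerDl.
by apply: mulr_ge0; rewrite ?ler0n ?sqr_ge0.
Qed.
End Main.

Set Implicit Arguments. Unset Strict Implicit.

Section Final.
Variable R : realFieldType.

Lemma le_bigmax_seq (I : eqType) (s : seq I) (F : I -> R) x0 i :
  i \in s -> F i <= \big[Num.max/x0]_(j <- s) F j.
Proof.
elim: s => // a s IH; rewrite inE big_cons => /orP [/eqP -> | /IH h].
  by rewrite le_max lexx.
by rewrite le_max h orbT.
Qed.

Variable m : nat.
Variable y : 'I_m -> R.
Hypothesis m0 : (0 < m)%N.

Lemma le_diam i j : y i - y j <= diam y.
Proof.
apply: (le_trans (y := \big[Num.max/0]_(j0 < m) (y i - y j0))).
  by apply: (le_bigmax_seq (fun j0 => y i - y j0)); rewrite mem_index_enum.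
by apply: (le_bigmax_seq (fun i0 => \big[Num.max/0]_(j0 < m) (y i0 - y j0))); rewrite mem_index_enum.
Qed.

Lemma sum_scal (a : R) (F : 'I_m -> R) : \sum_t a * F t = a * \sum_t F t.
Proof. by rewrite big_distrr. Qed.

Lemma induct k : exists s : seq {perm 'I_m}, size s = (2 ^ k)%N /\
  Delta y s <= Dmax y / (2 ^ k)%N%:R /\
  forall t t', post y s t - post y s t' <= diam y / (2 ^ k)%N%:R.
Proof.
elim: k => [|k [s [hs [hD hP]]]].
  exists [:: 1%g]; split => //.
  have pE : forall t, post y [:: 1%g] t = y t.
    by move=> t; rewrite /post big_cons big_nil /= perm1 invr1 mul1r addr0.
  rewrite expn0 !divr1; split.
    rewrite (_ : Delta y [:: 1%g] = Dmax y) //.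
    by rewrite /Delta /Dmax; congr (_ * _); apply: eq_bigr => t _; rewrite pE.
  by move=> t t'; rewrite !pE le_diam.
set M := meanY y.
set v := fun t => post y s t - M.
have [pi [hX hR]] := pairing v m0.
have s0 : (0 < size s)%N by rewrite hs expn_gt0.
have N0 : (size s)%:R != 0 :> R by rewrite pnatr_eq0 -lt0n.
have m0' : m%:R != 0 :> R by rewrite pnatr_eq0 -lt0n.
exists (s ++ map (fun p => pi * p)%g s).
have postE : forall t, post y (s ++ map (fun p => pi * p)%g s) t - M = (v t + v (pi t)) / 2.
  move=> t; rewrite /v /post size_cat size_map big_cat big_map /=.
  have -> : \sum_(p <- s) y ((pi * p)%g t) = \sum_(p <- s) y (p (pi t)) by apply: eq_bigr => p _; rewrite permM.
  set A := \sum_(p <- s) y (p t); set B := \sum_(p <- s) y (p (pi t)).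
  clearbody A B; rewrite natrD; field; by rewrite N0 /= -natrD pnatr_eq0 addn_eq0 negb_and -lt0n s0.
have sv : \sum_t v t = 0.
  rewrite /v sumrB (sum_post y s0) sumr_const card_ord /M /meanY.
  by rewrite -(mulr_natl (_ * _)) mulrA mulfV ?mul1r ?subrr.
split; first by rewrite size_cat size_map hs addnn -mul2n expnS.
split.
  rewrite /Delta -/M (eq_bigr _ (fun t _ => congr1 (fun x => x ^+ 2) (postE t))).
  have e : forall a b : R, ((a + b) / 2) ^+ 2 = 4^-1 * (a ^+ 2 + b ^+ 2 + 2 * (a * b)).
    by move=> a b; field.
  rewrite (eq_bigr _ (fun t _ => e (v t) (v (pi t)))) sum_scal !big_split /=.
  rewrite (sum_scal 2).
  have -> : \sum_t v (pi t) ^+ 2 = \sum_t v t ^+ 2.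
    by rewrite [RHS](reindex_inj (@perm_inj _ pi)).
  set A := \sum_t v t ^+ 2; set X := \sum_t v t * v (pi t).
  have hX' : X <= 0.
    move: hX; rewrite sv expr0n /= => h.
    have mpos : 0 < m%:R :> R by rewrite ltr0n.
    by rewrite -(pmulr_rle0 _ mpos); exact: h.
  have hA : m%:R^-1 * A <= Dmax y / (2 ^ k)%N%:R by exact: hD.
  have hP0 : 0 < m%:R^-1 :> R by rewrite invr_gt0 ltr0n.
  have hPX : m%:R^-1 * X <= 0 by rewrite pmulr_rle0.
  have -> : Dmax y / (2 ^ k.+1)%N%:R = (Dmax y / (2 ^ k)%N%:R) / 2.
    by rewrite expnS natrM; field; rewrite pnatr_eq0 expn_eq0.
  have -> : m%:R^-1 * (4^-1 * (A + A + 2 * X)) = (m%:R^-1 * A) / 2 + (m%:R^-1 * X) / 2.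
    by clearbody A X; field.
  lra.
move=> t t'.
set P := post y (s ++ [seq (pi * p)%g | p <- s]).
have h1 := postE t; have h2 := postE t'.
have -> : diam y / (2 ^ k.+1)%N%:R = (diam y / (2 ^ k)%N%:R) / 2.
  by rewrite expnS natrM; field; rewrite pnatr_eq0 expn_eq0.
have hh : v t + v (pi t) - (v t' + v (pi t')) <= diam y / (2 ^ k)%:R.
  apply: hR => a b; rewrite /v opprB addrA subrK; exact: hP.
rewrite -/P in h1 h2.
move: h1 h2 hh; set V1 := v t + v (pi t); set V2 := v t' + v (pi t'); set L := diam y / _.
move=> h1 h2 hh. lra.
Qed.

Theorem theorem1_gen (k : nat) : injective y ->
  (exists sigma : 'I_(2 ^ k) -> 'I_m -> 'I_m, is_scheme sigma /\
     exists D : R, is_Dach y sigma D /\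
       Dmax y - D <= Dmax y / (2 ^ k)%N%:R) /\
  (exists sigma : 'I_(2 ^ k) -> 'I_m -> 'I_m, is_scheme sigma /\
     exists D : R, is_Dach y sigma D /\
       Dmax y - D <= diam y ^+ 2 / (2 ^ (2 * k))%N%:R).
Proof.
move=> _; have [s [hs [hD hP]]] := induct k.
have [sc dach] := scheme_ok y m0 hs.
have dE : Dmax y - (Dmax y - Delta y s) = Delta y s by rewrite opprB addrC subrK.
split; exists (sig (k:=k) s); split => //; exists (Dmax y - Delta y s); split => //; rewrite dE //.
set L := diam y / (2 ^ k)%N%:R.
have -> : diam y ^+ 2 / (2 ^ (2 * k))%N%:R = L ^+ 2.
  by rewrite /L expr_div_n mulnC expnM natrX.
have sp : \sum_t post y s t = m%:R * meanY y.
  rewrite (sum_post y (_ : (0 < size s)%N)); last by rewrite hs expn_gt0.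
  by rewrite /meanY mulrA mulfV ?mul1r // pnatr_eq0 -lt0n.
have mpos : 0 < m%:R :> R by rewrite ltr0n.
have bnd : forall t, (post y s t - meanY y) ^+ 2 <= L ^+ 2.
  move=> t.
  have up : \sum_(t' < m) (post y s t - post y s t') <= L *+ m.
    rewrite (_ : L *+ m = \sum_(t' < m) L); last by rewrite sumr_const card_ord.
    apply: ler_sum => t' _; exact: hP.
  have lo : - (L *+ m) <= \sum_(t' < m) (post y s t - post y s t').
    rewrite (_ : L *+ m = \sum_(t' < m) L); last by rewrite sumr_const card_ord.
    rewrite -sumrN; apply: ler_sum => t' _.
    by rewrite lerNl opprB; exact: hP.
  move: up lo; rewrite sumrB sumr_const card_ord sp.
  rewrite -(mulr_natl (post y s t)) -(mulr_natl L) -mulrBr.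
  move: (post y s t - meanY y) => x up lo; clearbody L.
  have u1 : x <= L by rewrite -(ler_pM2l mpos).
  have u2 : - L <= x by rewrite -(ler_pM2l mpos) mulrN.
  have : 0 <= (L - x) * (L + x) by apply: mulr_ge0; lra.
  move=> h; rewrite -subr_ge0 (_ : L ^+ 2 - x ^+ 2 = (L - x) * (L + x)) //; ring.
rewrite /Delta; rewrite -(ler_pM2l mpos) mulrA mulfV ?mul1r; last by rewrite pnatr_eq0 -lt0n.
rewrite (_ : m%:R * L ^+ 2 = \sum_(t < m) L ^+ 2); last by rewrite sumr_const card_ord mulr_natl.
by apply: ler_sum => t _; exact: bnd.
Qed.
End Final.


Theorem theorem1 (R : realFieldType) (m k : nat) (y : 'I_m -> R) :
  (0 < m)%N -> injective y ->
  (exists sigma : 'I_(2 ^ k) -> 'I_m -> 'I_m, is_scheme sigma /\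
     exists D : R, is_Dach y sigma D /\
       Dmax y - D <= Dmax y / (2 ^ k)%N%:R) /\
  (exists sigma : 'I_(2 ^ k) -> 'I_m -> 'I_m, is_scheme sigma /\
     exists D : R, is_Dach y sigma D /\
       Dmax y - D <= diam y ^+ 2 / (2 ^ (2 * k))%N%:R).
Proof.
move=> m0 inj; exact: (@theorem1_gen R m y m0 k inj).
Qed.
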